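(* The power series $\mathcal{E}_1(x)=\sum_{n=1}^{\infty}e(n)x^n$ is a $2$-regular power series, and it is transcendental over $\mathbb{Q}(x)$.
   Context: The Stern polynomials $B_n(t)\in\mathbb{Z}[t]$ are defined by $B_0(t)=0$, $B_1(t)=1$, and for $n\geq 1$: $B_{2n}(t)=tB_n(t)$, $B_{2n+1}(t)=B_n(t)+B_{n+1}(t)$. For $n\geq1$ let $e(n)=\deg B_n(t)$. A power series $\sum_n a_nx^n$ with coefficients in a field is $k$-regular (in the sense of Allouche–Shallit) if the $\mathbb{Q}$-vector space (over the relevant field) spanned by the subsequences $(a_{k^{j}n+r})_{n\ge0}$, $j\ge0$, $0\le r<k^j$, is finite-dimensional. *)

(* Defs.v *)
From HB Require Import structures.
From mathcomp Require Import all_boot all_order all_algebra.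
Set Implicit Arguments. Unset Strict Implicit. Unset Printing Implicit Defensive.
Import Order.TTheory GRing.Theory Num.Theory.
Local Open Scope ring_scope.

Fixpoint stern_fuel (k n : nat) : {poly int} :=
  match k with
  | 0%N => 0
  | k'.+1 =>
      if n == 0%N then 0
      else if n == 1%N then 1
      else if odd n then stern_fuel k' n./2 + stern_fuel k' (n./2).+1
      else 'X * stern_fuel k' n./2
  end.

Definition stern (n : nat) : {poly int} := stern_fuel n.+1 n.

(* e(n) = deg B_n(t) for n >= 1 (size p = deg p + 1). *)
Definition stern_deg (n : nat) : nat := (size (stern n)).-1.

Definition E1 (n : nat) : rat := if n == 0%N then 0 else (stern_deg n)%:R.

(* k-regularity (Allouche–Shallit): the Q-span of the k-kernel
   { (a (k^j n + r))_n : j >= 0, 0 <= r < k^j } is finite-dimensional,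
   i.e. contained in the span of finitely many sequences g_0..g_{m-1}. *)
Definition k_regular (k : nat) (a : nat -> rat) : Prop :=
  exists (m : nat) (g : 'I_m -> nat -> rat),
    forall j r : nat, (r < k ^ j)%N ->
      exists c : 'I_m -> rat,
        forall n : nat, a (k ^ j * n + r)%N = \sum_(i < m) c i * g i n.

(* Formal power series over Q, as coefficient sequences. *)
Definition fps_mul (f g : nat -> rat) : nat -> rat :=
  fun n => \sum_(i < n.+1) f i * g (n - i)%N.
Definition fps_one : nat -> rat := fun n => (n == 0%N)%:R.
Definition fps_pow (f : nat -> rat) (i : nat) : nat -> rat :=
  iter i (fps_mul f) fps_one.
Definition fps_of_poly (p : {poly rat}) : nat -> rat := fun n => p`_n.

(* f is algebraic over Q(x): some nonzero P(x,y) in Q[x][y] (denominators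
   cleared) with P(x, f(x)) = 0. *)
Definition fps_algebraic (f : nat -> rat) : Prop :=
  exists P : {poly {poly rat}}, P != 0 /\
    forall n : nat,
      \sum_(i < size P) fps_mul (fps_of_poly P`_i) (fps_pow f i) n = 0.

Definition fps_transcendental (f : nat -> rat) : Prop := ~ fps_algebraic f.

(* Main.v *)
Require Import Defs.
From mathcomp Require Import all_boot all_order all_algebra.
From mathcomp Require Import zify ring lra.
Set Implicit Arguments. Unset Strict Implicit. Unset Printing Implicit Defensive.
Import Order.TTheory GRing.Theory Num.Theory.
Local Open Scope ring_scope.
Lemma half_facts n : (odd n + n./2 + n./2 = n)%N.
Proof. by rewrite -addnA addnn odd_double_half. Qed.

Lemma stern_fuel_eq k n : stern_fuel k.+1 n =
  if n == 0%N then 0 else if n == 1%N then 1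
  else if odd n then stern_fuel k n./2 + stern_fuel k (n./2).+1
  else 'X * stern_fuel k n./2.
Proof. by []. Qed.

Lemma stern_fuel_S k n : (n < k)%N -> stern_fuel k.+1 n = stern_fuel k n.
Proof.
elim: k n => [|k IH] n Hn //.
rewrite stern_fuel_eq [RHS]stern_fuel_eq.
case: (n =P 0%N) => [_|H0] //. case: (n =P 1%N) => [_|H1] //.
have := half_facts n.
case: (odd n) => Hh; rewrite /= in Hh.
  rewrite !IH //; lia.
rewrite IH //; lia.
Qed.

Lemma stern_fuelE k n : (n < k)%N -> stern_fuel k n = stern n.
Proof.
rewrite /stern => Hn.
elim: k Hn => [|k IH] Hn //.
case: (ltngtP n k) => Hk.
- by rewrite stern_fuel_S // IH.
- lia.
- by rewrite Hk.
Qed.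

Lemma stern_even n : (0 < n)%N -> stern (n.*2) = 'X * stern n.
Proof.
move=> Hn. rewrite {1}/stern stern_fuel_eq.
have -> : (n.*2 == 0%N) = false by apply/eqP; lia.
have -> : (n.*2 == 1%N) = false by apply/eqP; lia.
rewrite odd_double doubleK stern_fuelE //; lia.
Qed.

Lemma stern_odd n : (0 < n)%N -> stern (n.*2.+1) = stern n + stern n.+1.
Proof.
move=> Hn. rewrite {1}/stern stern_fuel_eq.
have -> : (n.*2.+1 == 0%N) = false by [].
have -> : (n.*2.+1 == 1%N) = false by apply/eqP; lia.
have -> : (n.*2.+1)./2 = n by rewrite /= uphalf_double.
have -> : odd n.*2.+1 = true by rewrite oddS odd_double.
rewrite !stern_fuelE //; lia.
Qed.

Lemma stern1 : stern 1 = 1. Proof. by []. Qed.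
Lemma coef_size (R : nzSemiRingType) (p : {poly R}) i : p`_i != 0 -> (i < size p)%N.
Proof. move=> Hi; rewrite ltnNge; apply: contra Hi => /leq_sizeP H; by rewrite H. Qed.

Lemma add_pos (p q : {poly int}) : 0 < lead_coef p -> 0 < lead_coef q ->
  size (p + q) = maxn (size p) (size q) /\ 0 < lead_coef (p + q).
Proof.
move=> Hp Hq.
case: (ltngtP (size p) (size q)) => Hs.
- by rewrite addrC size_polyDl ?lead_coefDl // (maxn_idPr (ltnW Hs)).
- by rewrite size_polyDl ?lead_coefDl // (maxn_idPl (ltnW Hs)).
- have Hc : (p + q)`_(size p).-1 = lead_coef p + lead_coef q.
    by rewrite coefD lead_coefE Hs lead_coefE.
  have Hpos : 0 < (p + q)`_(size p).-1 by rewrite Hc addr_gt0.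
  have Hp0 : p != 0 by rewrite -lead_coef_eq0 lt0r_neq0.
  have Hsz : size (p + q) = size p.
    apply/eqP; rewrite eqn_leq; apply/andP; split.
      by apply: leq_trans (size_polyD _ _) _; rewrite -Hs maxnn.
    have := coef_size (lt0r_neq0 Hpos).
    have : (0 < size p)%N by rewrite size_poly_gt0.
    by move=> H1 H2; rewrite -(ltn_predK H1).
  by rewrite Hsz lead_coefE Hsz.
Qed.
Lemma bin_ind (P : nat -> Prop) : P 1%N ->
  (forall m, (0 < m)%N -> P m -> P m.*2) ->
  (forall m, (0 < m)%N -> P m -> P m.+1 -> P m.*2.+1) ->
  forall n, (0 < n)%N -> P n.
Proof.
move=> H1 He Ho n.
elim/ltn_ind: n => n IH Hpos.
have := half_facts n.
case: (n =P 1%N) => [->|Hn1] //.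
case Hodd: (odd n) => /= Hh.
- have -> : n = (n./2).*2.+1 by rewrite -addnn; lia.
  apply: Ho; try lia; apply: IH; lia.
- have -> : n = (n./2).*2 by rewrite -addnn; lia.
  apply: He; try lia; apply: IH; lia.
Qed.

Lemma stern_pos n : (0 < n)%N -> 0 < lead_coef (stern n).
Proof.
move: n; apply: (@bin_ind (fun n => 0 < lead_coef (stern n))) => [|m Hm IH|m Hm IH1 IH2].
- by rewrite stern1 lead_coef1.
- by rewrite stern_even // mulrC lead_coefMX.
- by rewrite stern_odd //; case: (add_pos IH1 IH2).
Qed.

Definition e := stern_deg.

Lemma e1 : e 1 = 0%N. Proof. by rewrite /e /stern_deg stern1 size_poly1. Qed.

Lemma e_even n : (0 < n)%N -> e (n.*2) = (e n).+1.
Proof.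
move=> Hn. have Hp : stern n != 0 by rewrite -lead_coef_eq0 lt0r_neq0 // stern_pos.
by rewrite /e /stern_deg stern_even // mulrC size_mulX //= prednK // size_poly_gt0.
Qed.

Lemma e_odd n : (0 < n)%N -> e (n.*2.+1) = maxn (e n) (e n.+1).
Proof.
move=> Hn; rewrite /e /stern_deg stern_odd //.
case: (add_pos (stern_pos Hn) (stern_pos (ltn0Sn n))) => -> _.
have h1 : stern n != 0 by rewrite -lead_coef_eq0 lt0r_neq0 // stern_pos.
have h2 : stern n.+1 != 0 by rewrite -lead_coef_eq0 lt0r_neq0 // stern_pos.
move: h1 h2; rewrite -!size_poly_gt0.
case: (size (stern n)) => // a; case: (size (stern n.+1)) => // b _ _.
by rewrite maxnSS.
Qed.
Lemma e2 : e 2 = 1%N. Proof. by rewrite (e_even (n:=1)) // e1. Qed.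

Lemma e_lip n : (0 < n)%N -> (e n.+1 <= (e n).+1 /\ e n <= (e n.+1).+1)%N.
Proof.
move: n; apply: (@bin_ind (fun n => (e n.+1 <= (e n).+1 /\ e n <= (e n.+1).+1)%N)).
- by rewrite e1 e2.
- move=> m Hm [IH1 IH2]. rewrite e_odd // e_even //. split; lia.
- move=> m Hm [IH1 IH2] [IH3 IH4].
  have -> : (m.*2.+1.+1 = (m.+1).*2)%N by rewrite doubleS.
  rewrite e_odd // e_even //. split; lia.
Qed.

Lemma e_4a n : (0 < n)%N -> e (4 * n + 1) = (e n).+1.
Proof.
move=> Hn. have -> : (4 * n + 1 = (n.*2).*2.+1)%N by rewrite -!addnn; lia.
rewrite e_odd; last lia.
rewrite e_even // e_odd //. have [H1 H2] := e_lip Hn. lia.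
Qed.

Lemma e3 : e 3 = 1%N.
Proof. by rewrite (e_odd (n:=1)) // e1 e2. Qed.

Lemma e_4b n : e (4 * n + 3) = (e n.+1).+1.
Proof.
case: n => [|n]; first by rewrite e3 e1.
have Hn : (0 < n.+1)%N by [].
have -> : (4 * n.+1 + 3 = (n.+1.*2.+1).*2.+1)%N by rewrite -!addnn; lia.
rewrite e_odd; last lia.
have -> : ((n.+1.*2.+1).+1 = (n.+2).*2)%N by rewrite -!addnn; lia.
rewrite e_even // e_odd //. have [H1 H2] := e_lip Hn. lia.
Qed.

Lemma e_ub n : (0 < n)%N -> (2 ^ e n <= n)%N.
Proof.
move: n; apply: (@bin_ind (fun n => (2 ^ e n <= n)%N)).
- by rewrite e1.
- move=> m Hm IH. rewrite e_even // expnS -addnn. lia.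
- move=> m Hm IH1 IH2. rewrite e_odd //.
  case: (leqP (e m) (e m.+1)) => H.
  + rewrite -addnn; lia.
  + rewrite -addnn; lia.
Qed.

Lemma e_lb n : (0 < n)%N -> (n < 4 ^ (e n).+1)%N.
Proof.
elim/ltn_ind: n => n IH Hn.
case: (ltnP n 4) => Hn4.
  case: n IH Hn Hn4 => [|[|[|[|n]]]] // _ _ _.
  - by rewrite e1.
  - by rewrite e2.
  - by rewrite e3.
have Hnq : n = (4 * (n %/ 4) + n %% 4)%N by rewrite mulnC -divn_eq.
have Hr : (n %% 4 < 4)%N by rewrite ltn_mod.
move: (n %/ 4)%N (n %% 4)%N Hnq Hr => q r Hnq Hr.
have Hq : (0 < q)%N by lia.
have Hqn : (q < n)%N by lia.
have IHq := IH q Hqn Hq.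
have mono a b : (a <= b)%N -> (4 ^ a <= 4 ^ b)%N by move=> ?; rewrite leq_exp2l.
have H4 a : (4 ^ a.+1 = 4 * 4 ^ a)%N by rewrite expnS.
subst n.
case: r Hr IH Hn Hn4 Hqn => [|[|[|[|r]]]] // _ IH Hn Hn4 Hqn.
- have -> : (4 * q + 0 = (q.*2).*2)%N by rewrite -!addnn; lia.
  rewrite !e_even //; last lia. rewrite -!addnn !expnS.
  move: IHq; rewrite expnS; lia.
- rewrite e_4a // !expnS. move: IHq; rewrite expnS; lia.
- have -> : (4 * q + 2 = (q.*2.+1).*2)%N by rewrite -!addnn; lia.
  rewrite e_even // e_odd //.
  apply: (leq_trans _ (mono (e q).+2 _ _)); last lia.
  move: IHq; rewrite !expnS; lia.
- rewrite e_4b. have := IH q.+1 ltac:(lia) ltac:(lia).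
  rewrite !expnS; lia.
Qed.
Lemma E1E n : (0 < n)%N -> E1 n = (e n)%:R.
Proof. by rewrite /E1; case: n. Qed.

Lemma E1_0 : E1 0 = 0. Proof. by []. Qed.

Lemma E1_2 n : E1 (2 * n) = E1 n + 1 - (n == 0%N)%:R.
Proof.
case: n => [|n]; first by rewrite /E1 /=; ring.
have h : (0 < 2 * n.+1)%N by lia.
rewrite !E1E //.
rewrite mul2n e_even // /=. rewrite -natr1. ring.
Qed.

Lemma E1_4a n : E1 (4 * n + 1) = E1 n + 1 - (n == 0%N)%:R.
Proof.
case: n => [|n].
  by rewrite /E1 /= -[stern_deg 1]/(e 1) e1 /=; ring.
have h : (0 < 4 * n.+1 + 1)%N by lia.
rewrite !E1E //.
rewrite e_4a // /= -natr1. ring.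
Qed.

Lemma E1_4b n : E1 (4 * n + 3) = E1 n.+1 + 1.
Proof. have h : (0 < 4 * n + 3)%N by lia. by rewrite !E1E // e_4b -natr1. Qed.

Definition g5 (i : 'I_5) (n : nat) : rat :=
  match val i with
  | 0 => E1 n | 1 => E1 n.+1 | 2 => E1 (2 * n + 1) | 3 => 1 | _ => (n == 0%N)%:R
  end.

Definition inspan (f : nat -> rat) :=
  exists c : 'I_5 -> rat, forall n, f n = \sum_(i < 5) c i * g5 i n.

Lemma sum5 (F : 'I_5 -> rat) : \sum_(i < 5) F i =
  F (inord 0) + F (inord 1) + F (inord 2) + F (inord 3) + F (inord 4).
Proof.
rewrite !big_ord_recr big_ord0 /= add0r.
by congr (_ + _ + _ + _ + _); congr F; apply: val_inj; rewrite /= ?inordK.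
Qed.

Definition mk5 (a0 a1 a2 a3 a4 : rat) : 'I_5 -> rat :=
  fun i => match val i with 0 => a0 | 1 => a1 | 2 => a2 | 3 => a3 | _ => a4 end.

Lemma inspan_even f : inspan f -> inspan (fun n => f (2 * n)%N).
Proof.
move=> [c Hc].
pose c0 := c (inord 0); pose c1 := c (inord 1); pose c2 := c (inord 2);
pose c3 := c (inord 3); pose c4 := c (inord 4).
exists (mk5 (c0 + c2) 0 c1 (c0 + c2 + c3) (c4 - c0 - c2)) => n.
rewrite Hc !sum5 /g5 /mk5 /= !inordK //=.
have -> : (2 * (2 * n) + 1 = 4 * n + 1)%N by lia.
have -> : ((2 * n).+1 = 2 * n + 1)%N by lia.
have -> : ((2 * n)%N == 0%N) = (n == 0%N) by case: n.
rewrite E1_2 E1_4a /c0 /c1 /c2 /c3 /c4. ring.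
Qed.

Lemma inspan_odd f : inspan f -> inspan (fun n => f (2 * n + 1)%N).
Proof.
move=> [c Hc].
pose c0 := c (inord 0); pose c1 := c (inord 1); pose c2 := c (inord 2);
pose c3 := c (inord 3); pose c4 := c (inord 4).
exists (mk5 0 (c1 + c2) c0 (c1 + c2 + c3) 0) => n.
rewrite Hc !sum5 /g5 /mk5 /= !inordK //=.
have -> : (2 * (2 * n + 1) + 1 = 4 * n + 3)%N by lia.
have -> : ((2 * n + 1).+1 = 2 * n.+1)%N by lia.
have -> : ((2 * n + 1)%N == 0%N) = false by rewrite addn1.
rewrite E1_2 E1_4b /c0 /c1 /c2 /c3 /c4 /=. ring.
Qed.

Lemma inspan_kernel j r : (r < 2 ^ j)%N -> inspan (fun n => E1 (2 ^ j * n + r)%N).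
Proof.
elim: j r => [|j IH] r Hr.
  have -> : r = 0%N by move: Hr; rewrite expn0; case: r.
  exists (mk5 1 0 0 0 0) => n.
  rewrite sum5 /g5 /mk5 /= !inordK //= expn0 mul1n addn0. ring.
have Hd := divn_eq r (2 ^ j).
have Hm : (r %% 2 ^ j < 2 ^ j)%N by rewrite ltn_mod expn_gt0.
have Hb : (r %/ 2 ^ j < 2)%N.
  by rewrite ltn_divLR ?expn_gt0 // -expnS.
have := IH _ Hm.
move: (r %/ 2 ^ j)%N (r %% 2 ^ j)%N Hd Hm Hb => b r' Hd Hm Hb Hs.
case: b Hb Hd => [|[|b]] // _ Hd.
- have [c Hc] := inspan_even Hs. exists c => n. rewrite -Hc /=.
  congr E1. rewrite Hd expnS. nia.
- have [c Hc] := inspan_odd Hs. exists c => n. rewrite -Hc /=.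
  congr E1. rewrite Hd expnS. nia.
Qed.

Lemma regular : k_regular 2 E1.
Proof.
exists 5%N, g5 => j r Hr.
have [c Hc] := inspan_kernel Hr. by exists c.
Qed.
Definition norm1 (p : {poly rat}) : rat := \sum_(i < size p) `|p`_i|.

Lemma norm1_wide (p : {poly rat}) n : (size p <= n)%N -> norm1 p = \sum_(i < n) `|p`_i|.
Proof.
move=> H; rewrite /norm1 (big_ord_widen _ (fun i => `|p`_i|) H) big_mkcond /=.
apply: eq_bigr => i _; case: ifP => // /negbT; rewrite -leqNgt => Hi.
by rewrite nth_default // normr0.
Qed.

Lemma norm1_ge0 p : 0 <= norm1 p.
Proof. by apply: sumr_ge0 => i _. Qed.

Lemma norm1D p q : norm1 (p + q) <= norm1 p + norm1 q.
Proof.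
set n := maxn (size p) (size q).
rewrite (@norm1_wide (p + q) n) ?(@norm1_wide p n) ?(@norm1_wide q n).
- rewrite -big_split /=; apply: ler_sum => i _; rewrite coefD; exact: ler_normD.
- exact: leq_maxr.
- exact: leq_maxl.
- exact: size_polyD.
Qed.

Lemma norm1_MXC p c : norm1 (p * 'X + c%:P) = norm1 p + `|c|.
Proof.
rewrite (@norm1_wide _ (size p).+1) ?(@norm1_wide p (size p)) //.
  rewrite big_ord_recl /= coefD coefMX coefC /= add0r addrC; congr (_ + _).
  apply: eq_bigr => i _; rewrite coefD coefMX coefC /=.
  by rewrite addr0.
rewrite size_MXaddC; case: ifP => //.
Qed.

Lemma norm1_MX p : norm1 (p * 'X) = norm1 p.
Proof. by have := norm1_MXC p 0; rewrite addr0 normr0 addr0. Qed.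

Lemma norm1_CM c q : norm1 (c%:P * q) = `|c| * norm1 q.
Proof.
rewrite (@norm1_wide _ (size q)) ?(@norm1_wide q (size q)) //.
  rewrite mulr_sumr; apply: eq_bigr => i _; by rewrite coefCM normrM.
by rewrite mul_polyC; apply: size_scale_leq.
Qed.

Lemma norm1M p q : norm1 (p * q) <= norm1 p * norm1 q.
Proof.
elim/poly_ind: p => [|p c IH]; first by rewrite mul0r /norm1 size_poly0 !big_ord0 mul0r.
rewrite mulrDl mulrAC norm1_MXC mulrDl.
apply: le_trans (norm1D _ _) _.
rewrite norm1_MX norm1_CM; apply: lerD => //.
Qed.

Lemma norm1_exp p i : norm1 (p ^+ i) <= norm1 p ^+ i.
Proof.
elim: i => [|i IH].
  by rewrite !expr0 /norm1 size_poly1 big_ord1 coef1 normr1.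
rewrite !exprS; apply: le_trans (norm1M _ _) _.
apply: ler_wpM2l => //; exact: norm1_ge0.
Qed.

Lemma norm1_sum n (F : nat -> {poly rat}) :
  norm1 (\sum_(i < n) F i) <= \sum_(i < n) norm1 (F i).
Proof.
elim: n => [|n IH]; first by rewrite !big_ord0 /norm1 size_poly0 big_ord0.
rewrite !big_ord_recr /=; apply: le_trans (norm1D _ _) _; exact: lerD.
Qed.

Lemma horner_norm_le p y : 0 <= y -> y <= 1 -> `|p.[y]| <= norm1 p.
Proof.
move=> H0 H1; rewrite horner_coef; apply: le_trans (ler_norm_sum _ _ _) _.
apply: ler_sum => i _; rewrite normrM.
rewrite -[X in _ <= X]mulr1; apply: ler_wpM2l => //.
rewrite normrX ger0_norm //; exact: exprn_ile1.
Qed.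
Definition truncp (f : nat -> rat) (N : nat) : {poly rat} := \poly_(n < N) f n.

Lemma fps_mul_poly (p : {poly rat}) g (q : {poly rat}) n :
  (forall k, (k <= n)%N -> g k = q`_k) ->
  fps_mul (fps_of_poly p) g n = (p * q)`_n.
Proof.
move=> H; rewrite /fps_mul coefM; apply: eq_bigr => k _.
rewrite H //; exact: leq_subr.
Qed.

Lemma fps_pow_trunc f N i n : (n < N)%N ->
  fps_pow f i n = ((truncp f N) ^+ i)`_n.
Proof.
elim: i n => [|i IH] n Hn.
  by rewrite expr0 coef1 /fps_pow /= /fps_one.
rewrite /fps_pow iterS -/(fps_pow f i) exprS /fps_mul coefM.
apply: eq_bigr => k _.
rewrite coef_poly IH; last by apply: leq_ltn_trans (leq_subr _ _) Hn.
have Hk : (k < N)%N by apply: leq_ltn_trans Hn; rewrite -ltnS.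
by rewrite Hk.
Qed.

Lemma alg_trunc (P : {poly {poly rat}}) f N n :
  (n < N)%N ->
  \sum_(i < size P) fps_mul (fps_of_poly P`_i) (fps_pow f i) n =
  (\sum_(i < size P) P`_i * (truncp f N) ^+ i)`_n.
Proof.
move=> Hn; rewrite coef_sum; apply: eq_bigr => i _.
apply: fps_mul_poly => k Hk; apply: fps_pow_trunc.
exact: leq_ltn_trans Hn.
Qed.

Lemma tail_bound (R : {poly rat}) N x : (forall n, (n < N)%N -> R`_n = 0) ->
  0 <= x -> x <= 1 -> `|R.[x]| <= x ^+ N * norm1 R.
Proof.
move=> H0 Hx0 Hx1; rewrite horner_coef; apply: le_trans (ler_norm_sum _ _ _) _.
rewrite /norm1 mulr_sumr; apply: ler_sum => i _.
case: (ltnP i N) => Hi.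
  by rewrite H0 // mul0r normr0 mulr_ge0 // exprn_ge0.
rewrite normrM mulrC normrX ger0_norm //.
apply: ler_wpM2r => //. exact: ler_wiXn2l.
Qed.
Lemma U2 (p : {poly rat}) (M : rat) k : 1 <= M -> (size p <= k)%N ->
  M * `|p.[M]| <= norm1 p * M ^+ k.
Proof.
move=> HM Hk; rewrite horner_coef /norm1 mulr_suml.
have HM0 : 0 <= M by apply: le_trans HM.
apply: le_trans (ler_wpM2l HM0 (ler_norm_sum _ _ _)) _.
rewrite mulr_sumr; apply: ler_sum => i _.
rewrite normrM normrX (ger0_norm HM0) mulrCA -exprS.
apply: ler_wpM2l => //; apply: ler_weXn2l => //.
by apply: leq_trans Hk.
Qed.

Lemma split_top (p : {poly rat}) k : (size p <= k.+1)%N ->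
  (size (p - (p`_k)%:P * 'X^k)%R <= k)%N.
Proof.
move=> H; apply/leq_sizeP => j Hj.
rewrite coefB coefCM coefXn.
case: (ltngtP j k) => Hjk; first lia.
- rewrite /= mulr0 subr0 nth_default //; exact: leq_trans H Hjk.
- by rewrite Hjk (_ : true%:R = 1) // mulr1 subrr.
Qed.

Lemma U1 (h : {poly rat}) : h != 0 ->
  exists c, 0 < c /\ exists Z, 1 <= Z /\ forall z, Z <= z -> c <= `|h.[z]|.
Proof.
move=> Hh.
set k := (size h).-1.
set l := h`_k.
have Hl : l != 0 by rewrite /l /k -lead_coefE lead_coef_eq0.
have Hsz : (size h <= k.+1)%N by rewrite /k; case: (size h).
set r := h - l%:P * 'X^k.
have Hr : (size r <= k)%N by apply: split_top.
have Hla : 0 < `|l| by rewrite normr_gt0.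
exists (`|l| / 2); split; first by rewrite divr_gt0.
exists (1 + 2 * norm1 r / `|l|); split.
  rewrite lerDl; apply: divr_ge0 => //; apply: mulr_ge0 => //; exact: norm1_ge0.
move=> z Hz.
have Hr0 := norm1_ge0 r.
have Hz1 : 1 <= z by apply: le_trans Hz; rewrite lerDl; apply: divr_ge0 => //; apply: mulr_ge0.
have Hz0 : 0 < z by apply: lt_le_trans Hz1.
have Hzk : 1 <= z ^+ k by exact: exprn_ege1.
have HU := U2 Hz1 Hr.
have Hhe : h.[z] = l * z ^+ k + r.[z].
  by rewrite /r hornerD hornerN hornerM hornerC hornerXn addrC subrK.
have H2 : 2 * norm1 r <= `|l| * z.
  have : 2 * norm1 r / `|l| <= z by apply: le_trans Hz; rewrite lerDr.
  by rewrite ler_pdivrMr // [z * _]mulrC.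
have H3 : 2 * `|r.[z]| <= `|l| * z ^+ k.
  have HW : 0 <= z ^+ k by apply: exprn_ge0; apply: ltW.
  have H2' := ler_wpM2r HW H2.
  have : z * (2 * `|r.[z]|) <= z * (`|l| * z ^+ k) by nra.
  by rewrite ler_pM2l.
have H4 : `|l| * z ^+ k <= `|h.[z]| + `|r.[z]|.
  have -> : `|l| * z ^+ k = `|h.[z] - r.[z]|.
    by rewrite Hhe addrK normrM normrX (ger0_norm (ltW Hz0)).
  exact: ler_normB.
have H5 : `|l| <= `|l| * z ^+ k by rewrite ler_peMr // ltW.
lra.
Qed.
Lemma Dom (g : nat -> {poly rat}) d i0 : (i0 < d)%N -> g i0 != 0 ->
  exists c, 0 < c /\ exists Z, 1 <= Z /\ forall z M, Z <= z -> Z * z ^+ d <= M ->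
    c <= `|\sum_(i < d) (g i).[M] * z ^+ i|.
Proof.
move=> Hi0 Hg0.
set D0 := (\max_(i < d) size (g i))%N.
set k := D0.-1.
have HD0 : (size (g i0) <= D0)%N by rewrite /D0; exact: (@leq_bigmax _ (fun i : 'I_d => size (g i)) (Ordinal Hi0)).
have HD0p : (0 < D0)%N by apply: leq_trans HD0; rewrite size_poly_gt0.
have Hszi i : (i < d)%N -> (size (g i) <= k.+1)%N.
  move=> Hi; rewrite /k prednK //.
  exact: (@leq_bigmax _ (fun i : 'I_d => size (g i)) (Ordinal Hi)).
set h := \poly_(i < d) (g i)`_k.
have Hh : h != 0.
  have [i1 Hi1] : exists i1 : 'I_d, size (g i1) = D0.
    exists [arg max_(i > Ordinal Hi0) size (g i)].
    by rewrite /D0 (bigop.bigmax_eq_arg (Ordinal Hi0)).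
  apply/eqP => H0.
  have : h`_i1 = 0 by rewrite H0 coef0.
  rewrite coef_poly ltn_ord => /eqP.
  have Hn : g i1 != 0 by rewrite -size_poly_gt0 Hi1.
  by rewrite /k -Hi1 -lead_coefE lead_coef_eq0 (negbTE Hn).
have [ch [Hch [Zh [HZh1 HZh]]]] := U1 Hh.
set r := fun i => g i - ((g i)`_k)%:P * 'X^k.
have Hr i : (i < d)%N -> (size (r i) <= k)%N by move=> Hi; apply: split_top; apply: Hszi.
set Hr0 := \sum_(i < d) norm1 (r i).
have HHr0 : 0 <= Hr0 by apply: sumr_ge0 => i _; exact: norm1_ge0.
exists (ch / 2); split; first by rewrite divr_gt0.
exists (Zh + 2 * Hr0 / ch + 1); split.
  have : 0 <= 2 * Hr0 / ch by apply: divr_ge0 => //; [apply: mulr_ge0 | apply: ltW].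
  lra.
move=> z M Hz HM.
have Hq0 : 0 <= 2 * Hr0 / ch by apply: divr_ge0 => //; [apply: mulr_ge0 | apply: ltW].
have Hz1 : 1 <= z by lra.
have Hz0 : 0 <= z by lra.
have Hzd : 1 <= z ^+ d by exact: exprn_ege1.
have HM1 : (2 * Hr0 / ch + 1) * z ^+ d <= M.
  apply: le_trans HM; apply: ler_wpM2r; first by apply: exprn_ge0.
  lra.
have HM1' : 1 <= M by nra.
have HM0 : 0 <= M by lra.
have Hsplit : \sum_(i < d) (g i).[M] * z ^+ i =
    M ^+ k * h.[z] + \sum_(i < d) (r i).[M] * z ^+ i.
  rewrite horner_poly mulr_sumr -big_split /=; apply: eq_bigr => i _.
  rewrite /r hornerD hornerN hornerM hornerC hornerXn. ring.
have Hbound : M * `|\sum_(i < d) (r i).[M] * z ^+ i| <= Hr0 * M ^+ k * z ^+ d.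
  apply: le_trans (ler_wpM2l HM0 (ler_norm_sum _ _ _)) _.
  rewrite mulr_sumr /Hr0 !mulr_suml; apply: ler_sum => i _.
  rewrite normrM mulrA normrX (ger0_norm Hz0).
  apply: ler_pM.
  - by apply: mulr_ge0.
  - by apply: exprn_ge0.
  - apply: U2 => //; exact: Hr.
  - apply: ler_weXn2l => //; exact: ltnW.
have Hhz := HZh z ltac:(lra).
have HMk : 1 <= M ^+ k by exact: exprn_ege1.
set S := \sum_(i < d) (r i).[M] * z ^+ i.
rewrite Hsplit.
have HS : 2 * `|S| <= ch * M ^+ k.
  have : M * (2 * `|S|) <= M * (ch * M ^+ k).
    have H1 : 2 * Hr0 * z ^+ d <= ch * M.
      have := ler_wpM2l (ltW Hch) HM1.
      have -> : ch * ((2 * Hr0 / ch + 1) * z ^+ d) = (2 * Hr0 + ch) * z ^+ d.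
        by field; apply: lt0r_neq0.
      have : 0 <= ch * z ^+ d by apply: mulr_ge0; [apply: ltW | apply: exprn_ge0].
      nra.
    have HMk0 : 0 <= M ^+ k by apply: exprn_ge0.
    have := ler_wpM2r HMk0 H1.
    nra.
  by rewrite ler_pM2l; last lra.
have H5 : `|M ^+ k * h.[z]| - `|S| <= `|M ^+ k * h.[z] + S|.
  have := ler_normB (M ^+ k * h.[z] + S) S. rewrite addrK. lra.
rewrite normrM (ger0_norm (exprn_ge0 _ HM0)) in H5.
have : ch * M ^+ k <= M ^+ k * `|h.[z]|.
  rewrite [ch * _]mulrC; apply: ler_wpM2l => //; exact: exprn_ge0.
nra.
Qed.
Lemma E1_ge0 n : 0 <= E1 n.
Proof. by rewrite /E1; case: (n == 0%N). Qed.

Lemma E1_ub n L : (n < 2 ^ L)%N -> E1 n <= L%:R.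
Proof.
case: n => [|n] H; first by rewrite /E1 /=.
rewrite E1E // ler_nat.
have := e_ub (ltn0Sn n).
move=> H1. have H2 : (2 ^ e n.+1 < 2 ^ L)%N by apply: leq_ltn_trans H1 H.
rewrite ltn_exp2l // in H2. exact: ltnW.
Qed.

Lemma E1_lb n k : (4 ^ k <= n)%N -> k%:R <= E1 n.
Proof.
move=> H. have Hn : (0 < n)%N by apply: leq_trans H; rewrite expn_gt0.
rewrite E1E // ler_nat.
have H2 : (4 ^ k < 4 ^ (e n).+1)%N by apply: leq_ltn_trans H (e_lb Hn).
by rewrite ltn_exp2l // ltnS in H2.
Qed.

Lemma bern (u : rat) n : 0 <= u -> u <= 1 -> 1 - n%:R * u <= (1 - u) ^+ n.
Proof.
move=> H0 H1; elim: n => [|n IH]; first by rewrite expr0 mul0r subr0.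
rewrite exprS -natr1.
have Hp : 0 <= 1 - u by lra.
have := ler_wpM2l Hp IH.
have : 0 <= n%:R * u * u by apply: mulr_ge0 => //; apply: mulr_ge0.
nra.
Qed.

Lemma bernp (u : rat) n : 0 <= u -> 1 + n%:R * u <= (1 + u) ^+ n.
Proof.
move=> H0; elim: n => [|n IH]; first by rewrite expr0 mul0r addr0.
rewrite exprS -natr1.
have Hp : 0 <= 1 + u by lra.
have := ler_wpM2l Hp IH.
have : 0 <= n%:R * u * u by apply: mulr_ge0 => //; apply: mulr_ge0.
nra.
Qed.

Lemma half_pow (M : nat) : (0 < M)%N -> (1 - (M%:R : rat)^-1) ^+ M <= 2^-1.
Proof.
move=> HM.
have HMr : 0 < (M%:R : rat) by rewrite ltr0n.
set u := (M%:R : rat)^-1.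
have Hu0 : 0 <= u by rewrite /u invr_ge0 ltW.
have Hu1 : u <= 1 by rewrite /u invf_le1 // ler1n.
have HMu : M%:R * u = 1 by rewrite /u mulfV // lt0r_neq0.
have Hp := bernp M Hu0.
rewrite HMu in Hp.
have Hprod : (1 - u) ^+ M * (1 + u) ^+ M <= 1.
  rewrite -exprMn; apply: exprn_ile1.
    by apply: mulr_ge0; lra.
  nra.
have Hpos : 0 <= (1 - u) ^+ M by apply: exprn_ge0; lra.
have : (1 - u) ^+ M * 2 <= 1.
  apply: le_trans Hprod; apply: ler_wpM2l => //. lra.
Qed.

Lemma geom_sum (x : rat) N : (1 - x) * \sum_(n < N) x ^+ n = 1 - x ^+ N.
Proof.
elim: N => [|N IH]; first by rewrite big_ord0 mulr0 expr0 subrr.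
rewrite big_ord_recr /= mulrDr IH exprS. ring.
Qed.
Lemma truncp_eval f N (x : rat) : (truncp f N).[x] = \sum_(n < N) f n * x ^+ n.
Proof. by rewrite /truncp horner_poly. Qed.

Lemma pow4 K : (4 ^ K = 2 ^ (2 * K))%N.
Proof. by rewrite expnM. Qed.

Lemma A_upper K (M N : nat) (x : rat) : M = (4 ^ K)%N -> N = (M * M)%N ->
  x = 1 - (M%:R)^-1 -> (truncp E1 N).[x] <= (4 * K)%:R * M%:R.
Proof.
move=> HM HN Hx.
have HM0 : (0 < M)%N by rewrite HM expn_gt0.
have HMr : 0 < (M%:R : rat) by rewrite ltr0n.
have Hx0 : 0 <= x by rewrite Hx subr_ge0 invf_le1 // ler1n.
have Hx1 : x <= 1 by rewrite Hx lerBlDr lerDl invr_ge0 ltW.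
have HN2 : N = (2 ^ (4 * K))%N by rewrite HN HM !pow4 -expnD; have -> : (2 * K + 2 * K = 4 * K)%N by lia.
rewrite truncp_eval.
have H1 : \sum_(n < N) E1 n * x ^+ n <= \sum_(n < N) (4 * K)%:R * x ^+ n.
  apply: ler_sum => n _; apply: ler_wpM2r; first exact: exprn_ge0.
  apply: E1_ub; rewrite -HN2; exact: ltn_ord.
apply: le_trans H1 _.
rewrite -mulr_sumr; apply: ler_wpM2l => //.
have HG := geom_sum x N.
have Hxm : 1 - x = (M%:R)^-1 by rewrite Hx; ring.
rewrite Hxm in HG.
have HxN : 0 <= x ^+ N by exact: exprn_ge0.
have : (M%:R)^-1 * \sum_(n < N) x ^+ n <= 1 by rewrite HG; lra.
by rewrite ler_pdivrMl // mulr1.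
Qed.

Lemma A_lower K (M N : nat) (x : rat) : (0 < K)%N -> M = (4 ^ K)%N -> N = (M * M)%N ->
  x = 1 - (M%:R)^-1 -> (K.-1)%:R * M%:R / 8 <= (truncp E1 N).[x].
Proof.
move=> HK HM HN Hx.
have HM0 : (0 < M)%N by rewrite HM expn_gt0.
have HMr : 0 < (M%:R : rat) by rewrite ltr0n.
have Hx0 : 0 <= x by rewrite Hx subr_ge0 invf_le1 // ler1n.
set a := (4 ^ K.-1)%N.
have HMa : M = (4 * a)%N by rewrite HM /a -expnS prednK.
have Ha0 : (0 < a)%N by rewrite expn_gt0.
have H2aN : (a.*2 <= N)%N by rewrite HN HMa -addnn; nia.
rewrite truncp_eval -(big_mkord xpredT (fun n => E1 n * x ^+ n)).
have F0 n : 0 <= E1 n * x ^+ n by apply: mulr_ge0; [exact: E1_ge0 | exact: exprn_ge0].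
have HaN : (a <= N)%N by apply: leq_trans H2aN; rewrite -addnn leq_addr.
have Ha2 : (a <= a.*2)%N by rewrite -addnn leq_addr.
rewrite (@big_cat_nat _ _ _ a 0 N xpredT _ (leq0n a) HaN) /=.
rewrite (@big_cat_nat _ _ _ a.*2 a N xpredT _ Ha2 H2aN) /=.
have S1 : 0 <= \sum_(0 <= i < a) E1 i * x ^+ i by apply: sumr_ge0.
have S3 : 0 <= \sum_(a.*2 <= i < N) E1 i * x ^+ i by apply: sumr_ge0.
suff S2 : (K.-1)%:R * M%:R / 8 <= \sum_(a <= i < a.*2) E1 i * x ^+ i by lra.
have H1 : ((K.-1)%:R : rat) * M%:R / 8 <= \sum_(a <= i < a.*2) (((K.-1)%:R : rat) / 2).
  rewrite sumr_const_nat -addnn addnK HMa natrM.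
  rewrite -[_ *+ a]mulr_natr le_eqVlt; apply/orP; left; apply/eqP; by field.
apply: le_trans H1 _.
rewrite big_nat_cond [X in _ <= X]big_nat_cond.
apply: ler_sum => n /andP [/andP [Han Hn2a] _].
have HE := E1_lb Han.
have Hu0 : 0 <= (M%:R : rat)^-1 by rewrite invr_ge0 ltW.
have Hu1 : (M%:R : rat)^-1 <= 1 by rewrite invf_le1 // ler1n.
have Hb := bern n Hu0 Hu1.
rewrite -Hx in Hb.
have Hnu : n%:R * (M%:R : rat)^-1 <= 2^-1.
  have Hn' : (2 * n <= M)%N by rewrite HMa; rewrite -addnn in Hn2a; lia.
  have : (2 * n)%:R <= (M%:R : rat) by rewrite ler_nat.
  rewrite natrM => H.
  rewrite -(ler_pM2r HMr) -mulrA mulVf ?mulr1; last exact: lt0r_neq0.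
  lra.
have Hxn : 2^-1 <= x ^+ n by lra.
have HK0 : 0 <= (K.-1)%:R :> rat by [].
have := ler_pM HK0 _ HE Hxn.
rewrite -[_ / 2]/(_ * 2^-1). apply. lra.
Qed.
Lemma nat_bound (q : rat) : exists n : nat, q <= n%:R.
Proof.
case: (lerP 0 q) => H.
  exists (Num.Def.archi_bound q); exact: ltW (archi_boundP H).
by exists 0%N; rewrite ltW.
Qed.

Definition revD (T : {poly rat}) (D : nat) : {poly rat} := \poly_(k < D) T`_(D.-1 - k).

Lemma exprB_inv (y : rat) n j : y != 0 -> (j <= n)%N -> y ^+ (n - j) = y ^+ n * (y ^+ j)^-1.
Proof.
move=> Hy Hj; rewrite -{2}(subnK Hj) exprD mulrK //.
by rewrite unitfE expf_neq0.
Qed.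

Lemma revD_eval (T : {poly rat}) D (y : rat) : (size T <= D)%N -> y != 0 ->
  (revD T D).[y] = y ^+ D.-1 * T.[y^-1].
Proof.
move=> HT Hy; rewrite /revD horner_poly (horner_coef_wide _ HT) mulr_sumr.
rewrite (reindex_inj rev_ord_inj) /=; apply: eq_bigr => j _.
have Hj := ltn_ord j.
have -> : (D.-1 - (D - j.+1) = j)%N by lia.
rewrite mulrCA; congr (_ * _).
have -> : (D - j.+1 = D.-1 - j)%N by lia.
by rewrite exprB_inv //; [rewrite exprVn | lia].
Qed.

Lemma revD_neq0 (T : {poly rat}) D : T != 0 -> (size T <= D)%N -> revD T D != 0.
Proof.
move=> HT HD; apply/eqP => H0.
have Hs : (0 < size T)%N by rewrite size_poly_gt0.
set k0 := (D.-1 - (size T).-1)%N.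
have : (revD T D)`_k0 = 0 by rewrite H0 coef0.
rewrite /revD coef_poly.
have -> : (k0 < D)%N by rewrite /k0; lia.
have -> : (D.-1 - k0 = (size T).-1)%N by rewrite /k0; lia.
by move=> /eqP; rewrite -lead_coefE lead_coef_eq0 (negbTE HT).
Qed.

Lemma size_comp1X (p : {poly rat}) : (size (p \Po (1 - 'X)) <= size p)%N.
Proof.
case: (eqVneq p 0) => [->|Hp]; first by rewrite comp_poly0 size_poly0.
apply: leq_trans (size_comp_poly_leq _ _) _.
have -> : size (1 - 'X : {poly rat}) = 2%N.
  rewrite addrC size_polyDl ?size_polyN ?size_polyX // size_poly1 //.
by rewrite muln1 prednK // size_poly_gt0.
Qed.

Lemma comp1X_inv (p : {poly rat}) : (p \Po (1 - 'X)) \Po (1 - 'X) = p.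
Proof.
rewrite -comp_polyA.
have -> : (1 - 'X) \Po (1 - 'X) = 'X :> {poly rat}.
  by rewrite comp_polyB comp_polyC comp_polyX subKr.
exact: comp_polyXr.
Qed.

Lemma sq_exp t : (4 <= t)%N -> (t * t <= 2 ^ t)%N.
Proof.
elim: t => [|t IH] // Ht.
case: (ltngtP t 4) => H4.
- have -> : t = 3%N by lia. by [].
- have := IH (ltnW H4). rewrite expnS. nia.
- by rewrite H4.
Qed.

Lemma lin_exp a b : exists t0, forall t, (t0 <= t)%N -> (a * t + b < 2 ^ t)%N.
Proof.
exists (a + b + 5)%N => t Ht.
have := sq_exp (t := t) ltac:(lia).
nia.
Qed.
Lemma le_2exp a : (a <= 2 ^ a)%N.
Proof. exact: ltnW (ltn_expl _ (isT : (1 < 2)%N)). Qed.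

Lemma natF2 (Zn d t1 m : nat) :
  (forall t, (t1 <= t)%N -> (d * t + (Zn + 2 * d) < 2 ^ t)%N) -> (t1 <= m)%N ->
  (Zn * (4 * 2 ^ m) ^ d <= 4 ^ (2 ^ m))%N.
Proof.
move=> Ht Hm.
have E1' : (4 * 2 ^ m = 2 ^ (m + 2))%N by rewrite expnD mulnC.
rewrite E1' -expnM pow4.
apply: leq_trans (leq_mul (le_2exp Zn) (leqnn _)) _.
rewrite -expnD leq_exp2l //.
have := Ht m Hm. have := le_2exp m.
have : (2 ^ m <= 2 * 2 ^ m)%N by rewrite leq_pmull.
nia.
Qed.

Lemma natF3 (D d Hn t2 m : nat) :
  (forall t, (t2 <= t)%N -> ((D + 3 * d) * t + (Hn + 2 * d) < 2 ^ t)%N) -> (t2 <= m)%N ->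
  ((4 ^ (2 ^ m)) ^ D.-1 * Hn * (4 * 2 ^ m * (4 ^ (2 ^ m) * 4 ^ (2 ^ m))) ^ d
     < 2 ^ (4 ^ (2 ^ m)))%N.
Proof.
move=> Ht Hm.
set K := (2 ^ m)%N.
have HmK : (m <= K)%N by apply: le_2exp.
have E1' : (4 * K = 2 ^ (m + 2))%N by rewrite /K expnD mulnC.
rewrite E1' !pow4 -!expnD -!expnM.
apply: leq_ltn_trans (leq_mul (leq_mul (leqnn _) (le_2exp Hn)) (leqnn _)) _.
rewrite -!expnD ltn_exp2l //.
have := Ht (2 * K)%N ltac:(lia).
move=> H.
apply: leq_ltn_trans H.
have HD : (D.-1 <= D)%N by apply: leq_pred.
nia.
Qed.
Lemma aux_fin (c H Hn a w two : rat) : 0 < c -> 0 <= a -> 0 <= w -> 0 < two ->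
  H <= Hn * c -> c <= a * (two^-1 * (H * w)) -> a * Hn * w < two -> False.
Proof.
move=> Hc Ha Hw Ht HH Hle Hlt.
have Hti : 0 < two^-1 by rewrite invr_gt0.
have H1 : a * (two^-1 * (H * w)) <= a * (two^-1 * (Hn * c * w)).
  apply: ler_wpM2l => //; apply: ler_wpM2l; first exact: ltW.
  exact: ler_wpM2r.
have H2 : a * (two^-1 * (Hn * c * w)) = c * (a * Hn * w) * two^-1 by ring.
have H3 : c * (a * Hn * w) * two^-1 < c.
  rewrite ltr_pdivrMr // ltr_pM2l //.
have := le_trans Hle H1. rewrite H2 => H4.
have := le_lt_trans H4 H3. by rewrite ltxx.
Qed.

Lemma aux_Hz (Z z Znr Kr : rat) : Z <= Znr -> 8%:R * Znr <= Kr -> Kr / 8 <= z -> Z <= z.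
Proof. move=> *; lra. Qed.

Lemma transc : fps_transcendental E1.
Proof.
move=> [P [HP0 HP]].
set d := size P.
set D := (\max_(i < d) size ((P`_i)%R))%N.
set T := fun i => P`_i \Po (1 - 'X).
set g := fun i => revD (T i) D * 'X^i.
have HszT i : (i < d)%N -> (size (T i) <= D)%N.
  move=> Hi; apply: leq_trans (size_comp1X _) _.
  exact: (@leq_bigmax _ (fun i : 'I_d => size (P`_i)) (Ordinal Hi)).
have Hd0 : (0 < d)%N by rewrite /d size_poly_gt0.
set i0 := d.-1.
have Hi0 : (i0 < d)%N by rewrite /i0 prednK.
have HPi0 : P`_i0 != 0 by rewrite /i0 /d -lead_coefE lead_coef_eq0.
have HT0 : T i0 != 0.
  apply: contra HPi0 => /eqP HT. by rewrite -(comp1X_inv (P`_i0)) -/(T i0) HT comp_poly0.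
have Hg0 : g i0 != 0.
  by rewrite /g mulf_neq0 ?revD_neq0 ?HszT // expf_neq0 // polyX_eq0.
have [c [Hc [Z [HZ1 HDom]]]] := Dom Hi0 Hg0.
set H := \sum_(i < d) norm1 P`_i.
have HH0 : 0 <= H by apply: sumr_ge0 => i _; exact: norm1_ge0.
have [Zn HZn] := nat_bound Z.
have [Hn HHn] := nat_bound (H / c).
have [t1 Ht1] := lin_exp d (Zn + 2 * d).
have [t2 Ht2] := lin_exp (D + 3 * d) (Hn + 2 * d).
set m := (t1 + t2 + (8 * Zn + 1))%N.
set K := (2 ^ m)%N.
set M := (4 ^ K)%N.
set N := (M * M)%N.
have HmK : (m < K)%N by apply: ltn_expl.
have Ht1m : (t1 <= m)%N by rewrite /m -addnA leq_addr.
have Ht2m : (t2 <= m)%N by rewrite /m (addnC t1) -addnA leq_addr.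
have HF2 := natF2 Ht1 Ht1m.
have HF3 := natF3 Ht2 Ht2m.
rewrite -/K -/M -/N in HF2 HF3.
have HK0 : (0 < K)%N by rewrite expn_gt0.
have HZK : (8 * Zn + 1 <= K)%N by apply: leq_trans (ltnW HmK); rewrite /m leq_addl.
have HM0 : (0 < M)%N by rewrite expn_gt0.
have HMr : 0 < (M%:R : rat) by rewrite ltr0n.
have HMr1 : 1 <= (M%:R : rat) by rewrite ler1n.
set x : rat := 1 - (M%:R)^-1.
have Hx0 : 0 <= x by rewrite /x subr_ge0 invf_le1.
have Hx1 : x <= 1 by rewrite /x lerBlDr lerDl invr_ge0 ltW.
set Q := truncp E1 N.
set A := Q.[x].
set z := A / M%:R.
have HA1 := A_lower HK0 (erefl M) (erefl N) (erefl x).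
have HA2 := A_upper (erefl M) (erefl N) (erefl x).
rewrite -/Q -/A in HA1 HA2.
have HAz : A = M%:R * z by rewrite /z mulrC divfK // lt0r_neq0.
have Hz1 : (K.-1)%:R / 8 <= z.
  rewrite /z ler_pdivlMr //. rewrite mulrAC. by [].
have Hz2 : z <= (4 * K)%:R.
  by rewrite /z ler_pdivrMr.
have Hz0 : 0 <= z by apply: le_trans Hz1; apply: divr_ge0.
have Hz : Z <= z.
  have : ((8 * Zn)%:R : rat) <= (K.-1)%:R.
    by rewrite ler_nat -ltnS prednK //; rewrite addn1 in HZK.
  rewrite natrM => H8. exact: aux_Hz HZn H8 Hz1.
have HzM : Z * z ^+ d <= M%:R.
  have Hzd : z ^+ d <= ((4 * K)%:R) ^+ d.
    by apply: lerXn2r; rewrite ?nnegrE ?ler0n.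
  have HF2r : (Zn%:R : rat) * ((4 * K)%:R) ^+ d <= M%:R.
    by rewrite -natrX -natrM ler_nat.
  apply: le_trans HF2r; apply: ler_pM.
  - exact: (le_trans ler01 HZ1).
  - exact: exprn_ge0.
  - exact: HZn.
  - exact: Hzd.
have Hdom := HDom z M%:R Hz HzM.
set Rp := \sum_(i < d) P`_i * Q ^+ i.
have HRp0 n : (n < N)%N -> Rp`_n = 0.
  by move=> Hn'; rewrite /Rp -alg_trunc //; exact: HP.
have Hid : \sum_(i < d) (g i).[M%:R] * z ^+ i = (M%:R) ^+ D.-1 * Rp.[x].
  rewrite /Rp horner_sum mulr_sumr; apply: eq_bigr => i _.
  rewrite /g hornerM hornerXn revD_eval ?HszT //; last exact: lt0r_neq0.
  rewrite /T horner_comp hornerD hornerN hornerC hornerX hornerM horner_exp.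
  rewrite -/x -/A HAz [(M%:R * z) ^+ _]exprMn. by rewrite !mulrA.
rewrite Hid normrM ger0_norm in Hdom; last by apply: exprn_ge0; apply: ltW.
have Htail := tail_bound HRp0 Hx0 Hx1.
have HxN : x ^+ N <= (2^-1) ^+ M.
  rewrite /N exprM. apply: lerXn2r; rewrite ?nnegrE //; first by apply: exprn_ge0.
  exact: half_pow.
set W : rat := (4 * K * N)%:R.
have HW1 : 1 <= W by rewrite ler1n /W !muln_gt0 HK0 /= HM0.
have HN2 : N = (2 ^ (4 * K))%N by rewrite /N /M !pow4 -expnD -mulnDl.
have HQ : norm1 Q <= W.
  rewrite (@norm1_wide Q N) ?size_poly //.
  have -> : W = \sum_(n < N) ((4 * K)%:R : rat).
    by rewrite sumr_const card_ord /W natrM mulr_natr.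
  apply: ler_sum => n _; rewrite /Q coef_poly ltn_ord ger0_norm ?E1_ge0 //.
  apply: E1_ub. rewrite -HN2. exact: ltn_ord.
have HRn : norm1 Rp <= H * W ^+ d.
  apply: le_trans (norm1_sum d (fun i => P`_i * Q ^+ i)) _.
  rewrite /H mulr_suml; apply: ler_sum => i _.
  apply: le_trans (norm1M _ _) _; apply: ler_wpM2l; first exact: norm1_ge0.
  apply: le_trans (norm1_exp _ _) _.
  have HWi : norm1 Q ^+ i <= W ^+ i.
    by apply: lerXn2r; rewrite ?nnegrE ?norm1_ge0 // (le_trans ler01 HW1).
  apply: le_trans HWi _.
  by apply: ler_weXn2l => //; apply: ltnW.
have HMD0 : 0 <= (M%:R : rat) ^+ D.-1 by apply: exprn_ge0; apply: ltW.
have Hfin : c <= (M%:R) ^+ D.-1 * (((2 : rat) ^+ M)^-1 * (H * W ^+ d)).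
  apply: le_trans Hdom _. apply: ler_wpM2l => //.
  apply: le_trans Htail _. rewrite -exprVn.
  apply: ler_pM => //; first exact: exprn_ge0.
  exact: norm1_ge0.
have HHc : H <= Hn%:R * c by rewrite -ler_pdivrMr.
have HF3r : (M%:R : rat) ^+ D.-1 * Hn%:R * W ^+ d < 2 ^+ M.
  by rewrite /W -!natrX -natrM -natrM ltr_nat.
apply: (aux_fin Hc HMD0 _ _ HHc Hfin HF3r).
- apply: exprn_ge0; exact: (le_trans ler01 HW1).
- by apply: exprn_gt0.
Qed.

Theorem mainTheorem18 : k_regular 2 E1 /\ fps_transcendental E1.
Proof.
split; first exact: regular.
exact: transc.
Qed.
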